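(* Let $X$ be a completely subscalable nonnegative random variable and let $g : [0,\infty) \to [0,\infty)$ be an increasing (non-decreasing) convex function with $g(0) = 0$. Then the random variable $Y := g(X)$ is completely subscalable.
   Context: A nonnegative random variable $X$ with survival function $\overline{F}(x)=\mathbb{P}(X>x)$ is called completely subscalable if $\theta \, \overline{F}(x) \leq \overline{F}(x/\theta)$ for all $x \geq 0$ and all $\theta \in (0,1)$. *)

(* Defs.v *)
From HB Require Import structures.
From mathcomp Require Import all_boot all_order all_algebra.
From mathcomp Require Import all_classical all_reals all_analysis.
Set Implicit Arguments. Unset Strict Implicit. Unset Printing Implicit Defensive.
Import Order.TTheory GRing.Theory Num.Theory.
Local Open Scope classical_set_scope.
Local Open Scope ring_scope.

Definition survival d (T : measurableType d) (R : realType)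
  (P : probability T R) (X : T -> R) (x : R) : \bar R :=
  P [set w | x < X w].

Definition completely_subscalable d (T : measurableType d) (R : realType)
  (P : probability T R) (X : T -> R) : Prop :=
  [/\ measurable_fun setT X,
      (forall w, 0 <= X w) &
      forall (x theta : R), 0 <= x -> 0 < theta -> theta < 1 ->
        (theta%:E * survival P X x <= survival P X (x / theta))%E].

(* Main.v *)
Require Import Defs.
From HB Require Import structures.
From mathcomp Require Import all_boot all_order all_algebra.
From mathcomp Require Import all_classical all_reals all_analysis.
From mathcomp Require Import ring lra measurable_realfun.
Import Order.TTheory GRing.Theory Num.Theory.
Local Open Scope classical_set_scope.
Local Open Scope ring_scope.

Lemma mlt d (T : measurableType d) (R : realType) (f : T -> R) (a : R) :
  measurable_fun setT f -> measurable [set w | a < f w].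
Proof.
move=> mf; have := mf measurableT `]a, +oo[%classic (measurable_itv _).
rewrite setTI; congr measurable; apply/seteqP; split=> w /=;
by rewrite in_itv /= andbT.
Qed.

Lemma halfE (R : realType) (t s : R) :
  (1/2) * (t * s) + (1 - 1/2) * (t * s + (1 - t) * (2 * s)) = s.
Proof. by field. Qed.

Theorem lemma8 (d : measure_display) (T : measurableType d) (R : realType)
  (P : probability T R) (X : T -> R) (g : R -> R) :
  completely_subscalable P X ->
  (forall x, 0 <= x -> 0 <= g x) ->
  (forall x y, 0 <= x -> x <= y -> g x <= g y) ->
  (forall x y t, 0 <= x -> 0 <= y -> 0 <= t -> t <= 1 ->
     g (t * x + (1 - t) * y) <= t * g x + (1 - t) * g y) ->
  g 0 = 0 ->
  completely_subscalable P (g \o X).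
Proof.
move=> [mX X0 HX] g0 gmono gconv g00.
have gscale y t : 0 <= y -> 0 <= t -> t <= 1 -> g (t * y) <= t * g y.
  move=> y0 t0 t1; have := gconv y 0 t y0 (lexx 0) t0 t1.
  by rewrite g00 !mulr0 !addr0.
have mgX : measurable_fun setT (g \o X).
  have -> : g \o X = (fun x => g (Num.max x 0)) \o X.
    by apply: funext => w /=; rewrite max_l.
  apply: measurableT_comp => //; apply: nondecreasing_measurable => //.
  move=> a b ab /=; apply: gmono.
  - by rewrite le_max lexx orbT.
  - by rewrite ge_max !le_max ab lexx !orbT.
split => //; first by move=> w; apply: g0.
move=> x th x0 th0 th1.
pose S := [set y : R | 0 <= y /\ x < g y].
have [SN|S0] := pselect (S !=set0); last first.
  have -> : survival P (g \o X) x = 0%E.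
    rewrite /survival; have -> : [set w | x < (g \o X) w] = set0.
      apply/seteqP; split=> w //= xw; apply: S0; exists (X w); split => //.
    by rewrite measure0.
  by rewrite mule0 /survival measure_ge0.
have lbS : has_lbound S by exists 0 => y [].
pose s := inf S.
have s0 : 0 <= s by apply: lb_le_inf => // y [].
have key y : 0 <= y -> (x < g y) = (s < y).
  move=> y0; apply/idP/idP => [xy|sy]; last first.
    have [z [z0 xz] zy] := inf_lt SN sy.
    by apply: (lt_le_trans xz); apply: gmono => //; apply: ltW.
  have sy : s <= y by apply: ge_inf => //.
  rewrite lt_neqAle sy andbT; apply/negP => /eqP sy'.
  rewrite -sy' in xy.
  have spos : 0 < s.
    rewrite lt_neqAle s0 andbT; apply/negP => /eqP s00.
    by move: xy; rewrite -s00 g00 ltNge x0.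
  pose D := g (2 * s) - g s.
  have D0 : 0 <= D by rewrite subr_ge0; apply: gmono => //; lra.
  pose e := (g s - x) / (D + 1 + (g s - x)).
  have den0 : 0 < D + 1 + (g s - x) by lra.
  have e0 : 0 < e by apply: divr_gt0 => //; lra.
  have e1 : e < 1 by rewrite ltr_pdivrMr // mul1r; lra.
  have eD : e * D < g s - x.
    rewrite /e mulrAC ltr_pdivrMr // ltr_pM2l; first lra.
    lra.
  pose t := 1 - e.
  have t0 : 0 <= t by rewrite /t; lra.
  have t1 : t <= 1 by rewrite /t; lra.
  have h1 : g (t * s + (1 - t) * (2 * s)) <= t * g s + (1 - t) * g (2 * s).
    by apply: gconv => //; lra.
  have h2 : g ((1/2) * (t * s) + (1 - 1/2) * (t * s + (1 - t) * (2 * s)))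
            <= (1/2) * g (t * s) + (1 - 1/2) * g (t * s + (1 - t) * (2 * s)).
    apply: gconv => //; try lra.
    by apply: mulr_ge0.
    by apply: addr_ge0; apply: mulr_ge0 => //; lra.
  have E : (1/2) * (t * s) + (1 - 1/2) * (t * s + (1 - t) * (2 * s)) = s.
    by apply: halfE.
  rewrite E in h2.
  have hts : x < g (t * s).
    have h3 : t * g s + (1 - t) * g (2 * s) = g s + e * D by rewrite /t /D; ring.
    rewrite h3 in h1; lra.
  have ts0 : 0 <= t * s by apply: mulr_ge0.
  have : s <= t * s by apply: ge_inf => //.
  have es : 0 < e * s by apply: mulr_gt0.
  have -> : t * s = s - e * s by rewrite /t; ring.
  move=> h; have : s - e * s < s by rewrite ltrBlDr ltrDl.
  by rewrite ltNge h.
have -> : survival P (g \o X) x = survival P X s.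
  by rewrite /survival; congr (P _); apply/seteqP; split=> w /=; rewrite key.
apply: (le_trans (HX s th s0 th0 th1)).
rewrite /survival; apply: le_measure; rewrite ?inE; try exact: mlt.
move=> w /= sw.
have thX : s < th * X w by rewrite mulrC -ltr_pdivrMr.
rewrite -(key _ (mulr_ge0 (ltW th0) (X0 w))) in thX.
rewrite ltr_pdivrMr // mulrC.
apply: (lt_le_trans thX); apply: gscale => //; exact: ltW.
Qed.
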